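(* Let $w\in S_n$ and let the Rothe diagram $D(w)$ have columns $D_1,\ldots,D_n$. Then $w$ is fireworks if and only if, for every $j\in[n]$, $D_{w(j)}\neq\emptyset$ implies $\max(D_{w(j)})=j-1$.
   Context: Permutations are written in one-line notation $w(1)w(2)\cdots w(n)$. The Rothe diagram is $D(w)=\{(i,j)\in[n]^2: i<w^{-1}(j),\ j<w(i)\}$, with column $D_j=\{i:(i,j)\in D(w)\}$. The decreasing runs of $w$ are the maximal consecutive decreasing segments of the one-line notation. A permutation is fireworks if the initial elements of its decreasing runs occur in increasing order (e.g. $267419853$ has runs $2|6|741|9853$ and is fireworks). *)

(* Defs.v *)
(* Permutations of [n] are modelled as 'S_n acting on 'I_n,
   i.e. the ground set {0,...,n-1} (0-based shift of [n] = {1,...,n}). *)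
From mathcomp Require Import all_boot all_order all_fingroup.
Set Implicit Arguments. Unset Strict Implicit. Unset Printing Implicit Defensive.
Import GroupScope.

Definition rothe_col (n : nat) (w : 'S_n) (j : 'I_n) : {set 'I_n} :=
  [set i : 'I_n | (i < (w^-1)%g j)%N && (j < w i)%N].

(* Position i is the initial position of a (maximal) decreasing run of the
   one-line notation w(0) w(1) ... w(n-1) iff i is the first position or
   the previous entry is smaller (w(i-1) < w(i)). *)
Definition run_start (n : nat) (w : 'S_n) (i : 'I_n) : bool :=
  (val i == 0%N) || [exists k : 'I_n, (k.+1 == val i) && (w k < w i)%N].

Definition fireworks (n : nat) (w : 'S_n) : bool :=
  [forall i : 'I_n, forall k : 'I_n,
     [&& run_start w i, run_start w k & (i < k)%N] ==> (w i < w k)%N].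

(* Main.v *)
Require Import Defs.
From mathcomp Require Import all_boot all_order all_fingroup.
From mathcomp Require Import zify.

Lemma rs_below (n : nat) (w : 'S_n) (m : nat) (i : 'I_n) : val i = m ->
  exists s : 'I_n, [&& run_start w s, (s <= i)%N & (w i <= w s)%N].
Proof.
elim: m i => [|m IH] i Hi.
  by exists i; rewrite /run_start Hi eqxx /= !leqnn.
have Hm : (m < n)%N by move: (ltn_ord i); change (nat_of_ord i) with (val i); rewrite Hi; lia.
pose k := Ordinal Hm.
case: (ltnP (w k) (w i)) => Hk.
  exists i; rewrite !leqnn !andbT /run_start; apply/orP; right.
  by apply/existsP; exists k; rewrite Hi eqxx Hk.
have [s /and3P [Hs1 Hs2 Hs3]] := IH k erefl.
exists s; rewrite Hs1 /=; apply/andP; split.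
  rewrite Hi; by apply: leq_trans Hs2 _.
by apply: leq_trans Hk Hs3.
Qed.

Lemma col_mem (n : nat) (w : 'S_n) (j i : 'I_n) :
  (i \in rothe_col w (w j)) = (i < j)%N && (w j < w i)%N.
Proof. by rewrite /rothe_col inE permK. Qed.

Lemma w_neq (n : nat) (w : 'S_n) (a b : 'I_n) : a != b -> val (w a) != val (w b).
Proof.
move=> Hab; apply/negP => /eqP /val_inj /perm_inj E.
by rewrite E eqxx in Hab.
Qed.

Theorem proposition3p9 (n : nat) (w : 'S_n) :
  fireworks w <->
  (forall j : 'I_n, rothe_col w (w j) != set0 ->
     (\max_(i in rothe_col w (w j)) val i)%N = (val j).-1).
Proof.
split.
- move=> /forallP Hf j /set0Pn [i Hi].
  move: (Hi); rewrite col_mem => /andP [Hij Hwij].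
  have Hjn : ((val j).-1 < n)%N by apply: leq_ltn_trans (leq_pred _) (ltn_ord j).
  pose k := Ordinal Hjn.
  have Hkj : (k.+1 == val j) by rewrite /= prednK //; apply: leq_ltn_trans Hij.
  have Hk : (w j < w k)%N.
    case: (ltngtP (w j) (w k)) => // [Hlt|Heq].
    - have [s /and3P [Hs1 Hs2 Hs3]] := @rs_below n w (val i) i erefl.
      have Hrj : run_start w j.
        by rewrite /run_start; apply/orP; right; apply/existsP; exists k; rewrite Hkj.
      have := Hf s; move/forallP/(_ j).
      rewrite Hs1 Hrj /= (leq_ltn_trans Hs2 Hij) /= => Hsj.
      have := leq_ltn_trans Hs3 Hsj.
      by move=> H; have := ltn_trans Hwij H; rewrite ltnn.
    - exfalso; have : j != k.
        apply/negP => /eqP E; move: Hkj; rewrite -E /=; lia.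
      by move/(@w_neq n w); rewrite /= Heq eqxx.
  apply/eqP; rewrite eqn_leq; apply/andP; split.
    apply/bigmax_leqP => i' ; rewrite col_mem => /andP [H _]; move: H Hij; rewrite /=; lia.
  have Hkin : k \in rothe_col w (w j).
    rewrite col_mem Hk andbT /=; move: Hij; rewrite /=; lia.
  by have := @leq_bigmax_cond _ _ (fun i : 'I_n => val i) k Hkin.
- move=> H; apply/forallP => i; apply/forallP => k; apply/implyP.
  move=> /and3P [Hi Hk Hik].
  case: (ltngtP (w i) (w k)) => // [Hgt|Heq]; last first.
    have : i != k by apply/negP => /eqP E; rewrite E ltnn in Hik.
    by move/(@w_neq n w); rewrite /= Heq eqxx.
  have Hin : i \in rothe_col w (w k) by rewrite col_mem Hik Hgt.
  have Hne : rothe_col w (w k) != set0 by apply/set0Pn; exists i.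
  have Hmax := H k Hne.
  have Hc : (0 < #|rothe_col w (w k)|)%N by rewrite card_gt0.
  have [i0 Hi0 Ei0] := eq_bigmax_cond (fun i : 'I_n => val i) Hc.
  move: Hk; rewrite /run_start => /orP [/eqP Hk0|/existsP [k' /andP [/eqP Ek' Hk']]].
    by rewrite Hk0 in Hik.
  have E0 : i0 = k' by apply: val_inj; rewrite /= -Ei0 Hmax -Ek'.
  move: Hi0; rewrite E0 col_mem => /andP [_ Hc'].
  by have := ltn_trans Hk' Hc'; rewrite ltnn.
Qed.
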